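(* There exist parameter classes $\Phi,\Psi$ and ground truth $\phi^*\in\Phi,\psi^*\in\Psi$ (with $x,y,z$ taking values in the positive integers and no side information) such that for every constant $c>0$ there exist $m,n\ge c$ for which, with probability at least $\frac12(1-e^{-1})e^{-1}$, the output $(\hat\phi,\hat\psi)$ of the two-phase MLE algorithm satisfies $$d_{\mathrm{TV}}\big(\mathbb P_{\hat\phi,\hat\psi}(x,y),\mathbb P_{\phi^*,\psi^*}(x,y)\big)\ge\frac18.$$
   Context: Setup: $\Phi$ indexes joint distributions $\mathbb P_\phi(x,z)$ and $\Psi$ indexes conditional distributions $\mathbb P_\psi(y\mid z)$; $\mathbb P_{\phi,\psi}(x,y)=\sum_z\mathbb P_\phi(x,z)\mathbb P_\psi(y\mid z)$. Data: $m$ i.i.d. unlabeled $x_i\sim\mathbb P_{\phi^*}(x)$ and independent $n$ i.i.d. labeled $(x_j,y_j)\sim\mathbb P_{\phi^*,\psi^*}(x,y)$. Two-phase MLE algorithm: $\hat\phi\in\arg\max_{\phi\in\Phi}\sum_{i=1}^m\log p_\phi(x_i)$, then $\hat\psi\in\arg\max_{\psi\in\Psi}\sum_{j=1}^n\log p_{\hat\phi,\psi}(x_j,y_j)$. $d_{\mathrm{TV}}(P,Q)=\frac12\sum|p-q|$. *)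

(* Defs.v *)
From HB Require Import structures.
From mathcomp Require Import all_boot all_order all_algebra.
From mathcomp Require Import all_classical all_reals all_analysis.
Set Implicit Arguments. Unset Strict Implicit. Unset Printing Implicit Defensive.
Import Order.TTheory GRing.Theory Num.Theory.
Local Open Scope classical_set_scope.
Local Open Scope ring_scope.

(* The value spaces of x, y, z (positive integers) are represented by nat
   (relabeling k |-> k-1). *)

Section TwoPhase.
Variable R : realType.

Definition is_joint_pmf (phi : nat -> nat -> R) : Prop :=
  (forall x z, 0 <= phi x z) /\
  \esum_(xz in [set: nat * nat]) (phi xz.1 xz.2)%:E = 1%:E.

Definition is_cond_pmf (psi : nat -> nat -> R) : Prop :=
  (forall z y, 0 <= psi z y) /\
  forall z, \esum_(y in [set: nat]) (psi z y)%:E = 1%:E.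

Definition marg (phi : nat -> nat -> R) (x : nat) : R :=
  fine (\esum_(z in [set: nat]) (phi x z)%:E).

Definition joint (phi psi : nat -> nat -> R) (x y : nat) : R :=
  fine (\esum_(z in [set: nat]) (phi x z * psi z y)%:E).

Definition dTV (p q : nat -> nat -> R) : \bar R :=
  (2^-1)%:E * \esum_(xy in [set: nat * nat]) (`|p xy.1 xy.2 - q xy.1 xy.2|)%:E.

(* likelihoods (maximizing the product = maximizing the sum of logs,
   with log 0 = -oo) *)
Definition lik1 (phi : nat -> nat -> R) (xs : seq nat) : R :=
  \prod_(x <- xs) marg phi x.

Definition lik2 (phi psi : nat -> nat -> R) (ds : seq (nat * nat)) : R :=
  \prod_(d <- ds) joint phi psi d.1 d.2.

Definition mle1 (Phi : set (nat -> nat -> R)) (xs : seq nat)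
    (phih : nat -> nat -> R) : Prop :=
  Phi phih /\ forall phi, Phi phi -> lik1 phi xs <= lik1 phih xs.

Definition mle2 (Psi : set (nat -> nat -> R)) (phih : nat -> nat -> R)
    (ds : seq (nat * nat)) (psih : nat -> nat -> R) : Prop :=
  Psi psih /\ forall psi, Psi psi -> lik2 phih psi ds <= lik2 phih psih ds.

Definition sample_weight (phis psis : nat -> nat -> R) (m n : nat)
    (s : m.-tuple nat * n.-tuple (nat * nat)) : R :=
  (\prod_(x <- s.1) marg phis x) * (\prod_(d <- s.2) joint phis psis d.1 d.2).

Definition sample_prob (phis psis : nat -> nat -> R) (m n : nat)
    (E : set (m.-tuple nat * n.-tuple (nat * nat))) : \bar R :=
  \esum_(s in E) (sample_weight phis psis s)%:E.

Definition mle_fails (Phi Psi : set (nat -> nat -> R)) (phis psis : nat -> nat -> R)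
    (m n : nat) : set (m.-tuple nat * n.-tuple (nat * nat)) :=
  [set s : m.-tuple nat * n.-tuple (nat * nat) | (exists phih, mle1 Phi s.1 phih) /\
           (forall phih, mle1 Phi s.1 phih -> exists psih, mle2 Psi phih s.2 psih) /\
           (forall phih psih, mle1 Phi s.1 phih -> mle2 Psi phih s.2 psih ->
              ((8^-1)%:E <= dTV (joint phih psih) (joint phis psis))%E)].

End TwoPhase.

Arguments mle_fails {R} Phi Psi phis psis m n.
Arguments sample_prob {R} phis psis {m n} E.
Arguments sample_weight {R} phis psis {m n} s.

(* Main.v *)
Require Import Defs.
From HB Require Import structures.
From mathcomp Require Import all_boot all_order all_algebra.
From mathcomp Require Import all_classical all_reals all_analysis.
From mathcomp Require Import lra.
Import Order.TTheory GRing.Theory Num.Theory.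
Local Open Scope classical_set_scope.
Local Open Scope ring_scope.

Lemma esum_pt {R : realType} (T : choiceType) (f : T -> R) t :
  0 <= f t -> (forall i, i != t -> f i = 0) ->
  \esum_(i in [set: T]) (f i)%:E = (f t)%:E.
Proof.
move=> f0 fz.
rewrite (esumID [set t]); last first.
  move=> i _; case: (eqVneq i t) => [->|/fz ->]; by rewrite lee_fin.
rewrite setTI esum_set1 ?lee_fin// esum1 ?adde0// => i [_ /= it].
by rewrite fz//; apply/eqP.
Qed.

Lemma esum_split {R : realType} (T : choiceType) (f : T -> \bar R) t :
  (forall i, (0 <= f i)%E) ->
  \esum_(i in [set: T]) f i = (f t + \esum_(i in [set: T]) if i == t then 0 else f i)%E.
Proof.
move=> f0; rewrite (esumID [set t]) //.
rewrite setTI esum_set1 // esum_mkcondr; congr (_ + _)%E.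
apply: eq_esum => i _; rewrite in_setC /=.
by case: (eqVneq i t) => [->|it]; rewrite ?in_set1 ?eqxx/= ?(negPf it).

Qed.

Definition pp {R : realType} (k : nat) : R := 1 / (2 ^ (k + 1))%:R.

Lemma pp_gt0 {R : realType} k : 0 < pp (R:=R) k.
Proof. by rewrite /pp divr_gt0 // ltr0n expn_gt0. Qed.

Lemma pp0 {R : realType} : pp (R:=R) 0 = 2^-1.
Proof. by rewrite /pp add0n expn1 div1r. Qed.

Lemma pp_le {R : realType} j k : (j <= k)%N -> pp (R:=R) k <= pp j.
Proof.
move=> jk; rewrite /pp ler_pdivlMr ?ltr0n ?expn_gt0 // mulrC mulrA.
rewrite ler_pdivrMr ?ltr0n ?expn_gt0 // !mul1r mulr1 ler_nat leq_pexp2l //.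
by rewrite leq_add2r.
Qed.

Lemma esum_pp {R : realType} : \esum_(i in [set: nat]) (pp (R:=R) i)%:E = 1%E.
Proof.
rewrite -nneseries_esumT; last by move=> n; rewrite lee_fin ltW // pp_gt0.
have := @cvg_geometric_eseries_half R 1 0.
rewrite expr0 divr1 => H.
apply: cvg_lim => //.
Qed.


Definition phis {R : realType} (x z : nat) : R := if z == x then pp x else 0.
Definition qq {R : realType} (j x : nat) : R :=
  if x == 0%N then pp 0 + pp j else if x == j then 0 else pp x.
Definition phiJ {R : realType} (j x z : nat) : R := if z == x.+1 then qq j x else 0.
Definition psis {R : realType} (z y : nat) : R := if y == z then 1 else 0.

Lemma qq_ge0 {R : realType} j x : 0 <= qq (R:=R) j x.
Proof.
have := @pp_gt0 R; rewrite /qq => h.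
case: ifP => _; first by rewrite addr_ge0 // ltW.
by case: ifP => _ //; rewrite ltW.
Qed.

Lemma marg_phis {R : realType} x : marg (phis (R:=R)) x = pp x.
Proof.
rewrite /marg (esum_pt _ _ x) /phis ?eqxx ?ltW ?pp_gt0 //.
by move=> i /negPf ->.
Qed.

Lemma marg_phiJ {R : realType} j x : marg (phiJ (R:=R) j) x = qq j x.
Proof.
rewrite /marg (esum_pt _ _ x.+1) /phiJ ?eqxx ?qq_ge0 //.
by move=> i /negPf ->.
Qed.

Lemma joint_s {R : realType} x y :
  joint (phis (R:=R)) psis x y = if y == x then pp x else 0.
Proof.
rewrite /joint (esum_pt _ _ x) /phis /psis ?eqxx //.
- by case: ifP; rewrite ?mulr1 ?mulr0.
- by case: ifP; rewrite ?mulr1 ?mulr0 // ltW // pp_gt0.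
- by move=> i /negPf ->; rewrite mul0r.
Qed.

Lemma joint_J00 {R : realType} j : joint (phiJ (R:=R) j) psis 0 0 = 0.
Proof.
rewrite /joint (esum_pt _ _ 0%N) /phiJ /psis ?eqxx //=.
- by rewrite mul0r.
- by move=> i; rewrite eq_sym => /negPf ->; rewrite mulr0.
Qed.

Lemma esumXT {R : realType} (a : nat -> nat -> \bar R) :
  (forall i j, (0 <= a i j)%E) ->
  \esum_(k in [set: nat * nat]) a k.1 k.2 =
  \esum_(i in [set: nat]) \esum_(j in [set: nat]) a i j.
Proof.
move=> a0; rewrite (esum_esum (I:=setT) (J:=fun _ => setT)) //.
by congr esum; apply/seteqP; split => -[i j].
Qed.

Lemma pmf_phis {R : realType} : is_joint_pmf (phis (R:=R)).
Proof.
split.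
  by move=> x z; rewrite /phis; case: ifP => _ //; rewrite ltW // pp_gt0.
rewrite (esumXT (fun x z => (phis x z)%:E)); last by move=> x z; rewrite lee_fin /phis; case: ifP => _ //; rewrite ltW // pp_gt0.
rewrite -esum_pp; apply: eq_esum => x _.
rewrite (esum_pt _ _ x) /phis ?eqxx ?ltW ?pp_gt0 //.
by move=> i /negPf ->.
Qed.

Lemma esum_split2 {R : realType} (f : nat -> \bar R) j : (j == 0%N) = false ->
  (forall i, (0 <= f i)%E) ->
  \esum_(i in [set: nat]) f i = (f 0%N + f j +
     \esum_(i in [set: nat]) if i == j then 0 else if i == 0%N then 0 else f i)%E.
Proof.
move=> jn0 f0; rewrite (esum_split _ _ 0%N) //.
rewrite (esum_split _ _ j); last by move=> i; case: ifP.
by rewrite jn0 addeA.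
Qed.

Lemma pmf_phiJ {R : realType} j : (0 < j)%N -> is_joint_pmf (phiJ (R:=R) j).
Proof.
move=> j0; split.
  by move=> x z; rewrite /phiJ; case: ifP => _ //; rewrite qq_ge0.
rewrite (esumXT (fun x z => (phiJ j x z)%:E)); last by move=> x z; rewrite lee_fin /phiJ; case: ifP => _ //; rewrite qq_ge0.
rewrite (eq_esum (b := fun x => (qq j x)%:E)); last first.
  move=> x _; rewrite (esum_pt _ _ x.+1) /phiJ ?eqxx ?qq_ge0 //.
  by move=> i /negPf ->.
rewrite -esum_pp.
have q0 : forall i, (0 <= (qq (R:=R) j i)%:E)%E by move=> i; rewrite lee_fin qq_ge0.
have p0 : forall i, (0 <= (pp (R:=R) i)%:E)%E by move=> i; rewrite lee_fin ltW // pp_gt0.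
have jn0 : (j == 0%N) = false by rewrite eqn0Ngt j0.
rewrite (esum_split2 _ _ jn0) // (esum_split2 (fun i => (pp i)%:E) _ jn0) //.
rewrite (eq_esum (b := fun i => if i == j then 0%E else if i == 0%N then 0%E else (pp i)%:E)); last first.
  move=> i _; rewrite /qq; case: (eqVneq i j) => // ij.
  by case: (eqVneq i 0%N) => // ->.
rewrite /qq eqxx jn0 eqxx.
by rewrite adde0 EFinD.
Qed.

Lemma cond_psis {R : realType} : is_cond_pmf (psis (R:=R)).
Proof.
split; first by move=> z y; rewrite /psis; case: ifP.
move=> z; rewrite (esum_pt _ _ z) /psis ?eqxx //.
by move=> i /negPf ->.
Qed.


Lemma dTV_J {R : realType} j :
  ((8^-1 : R)%:E <= dTV (joint (phiJ (R:=R) j) psis) (joint phis psis))%E.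
Proof.
rewrite /dTV.
have H : ((2^-1 : R)%:E <= \esum_(xy in [set: nat * nat])
   (`|joint (phiJ (R:=R) j) psis xy.1 xy.2 - joint phis psis xy.1 xy.2|)%:E)%E.
  apply: esum_ge; exists [set (0%N, 0%N)].
    by split; [exact: finite_set1|].
  rewrite fsbig_set1 /= joint_J00 joint_s eqxx pp0 sub0r normrN.
  by rewrite ger0_norm.
apply: le_trans (_ : ((2^-1 : R)%:E * (2^-1 : R)%:E <= _)%E).
  rewrite -EFinM lee_fin; lra.
by rewrite lee_pmul2l // lte_fin.
Qed.


Definition Phi0 {R : realType} : set (nat -> nat -> R) :=
  [set phi | phi = phis \/ exists2 j, (0 < j)%N & phi = phiJ j].
Definition Psi0 {R : realType} : set (nat -> nat -> R) := [set psis].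

Lemma lik_phis {R : realType} xs : lik1 (phis (R:=R)) xs = \prod_(x <- xs) pp x.
Proof. by rewrite /lik1; apply: eq_bigr => x _; rewrite marg_phis. Qed.

Lemma lik_phiJ {R : realType} j xs : lik1 (phiJ (R:=R) j) xs = \prod_(x <- xs) qq j x.
Proof. by rewrite /lik1; apply: eq_bigr => x _; rewrite marg_phiJ. Qed.

Lemma phase1 {R : realType} (xs : seq nat) : 0%N \in xs ->
  exists js, mle1 (Phi0 (R:=R)) xs (phiJ js) /\
    (forall phih, mle1 (Phi0 (R:=R)) xs phih -> exists2 j, (0 < j)%N & phih = phiJ j).
Proof.
move=> x0.
pose P := fun j => (0 < j)%N && (j \notin xs).
have exP : exists j, P j.
  exists (\max_(x <- xs) x).+1; rewrite /P /=; apply/negP => H.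
  by have := leq_bigmax_seq (F := id) (P := xpredT) _ H isT; rewrite ltnn.
case: (ex_minnP exP) => js /andP[js0 jsn] jsmin.
have ppge0 : forall i, 0 <= pp (R:=R) i by move=> i; rewrite ltW // pp_gt0.
have A : forall j, j \notin xs -> \prod_(x <- xs) qq (R:=R) j x =
    \prod_(x <- xs) (if x == 0%N then pp 0 + pp j else pp x).
  move=> j jn; apply: eq_big_seq => x xin; rewrite /qq.
  case: ifP => // _; case: (eqVneq x j) => // xj.
  by rewrite -xj xin in jn.
have B : forall j, (0 < j)%N -> j \in xs -> \prod_(x <- xs) qq (R:=R) j x = 0.
  move=> j j0 jin; rewrite (big_rem j) //= /qq eqxx.
  by rewrite eqn0Ngt j0 /= mul0r.
have C : \prod_(x <- xs) pp (R:=R) x < \prod_(x <- xs) qq js x.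
  rewrite (big_rem 0%N) // [X in _ < X](big_rem 0%N) //= {1}/qq eqxx.
  set a := \prod_(y <- rem 0%N xs) pp y.
  set b := \prod_(y <- rem 0%N xs) qq js y.
  have a0 : 0 < a by apply: prodr_gt0 => i _; apply: pp_gt0.
  have ab : a <= b.
    rewrite /a /b big_seq [X in _ <= X]big_seq; apply: ler_prod => x xin.
    rewrite ppge0 /= /qq; case: ifP => [/eqP ->|_].
      by rewrite lerDl ppge0.
    case: (eqVneq x js) => [xj|_] //.
    by move: xin; rewrite xj => /mem_rem; rewrite (negPf jsn).
  have p0 := @pp_gt0 R 0; have pj := @pp_gt0 R js.
  apply: le_lt_trans (_ : pp 0 * b < _).
    by rewrite ler_pM2l.
  by rewrite ltr_pM2r ?ltrDl // (lt_le_trans a0 ab).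
have D : forall j, (0 < j)%N -> j \notin xs ->
    \prod_(x <- xs) qq (R:=R) j x <= \prod_(x <- xs) qq js x.
  move=> j j0 jn; rewrite (A j jn) (A js jsn); apply: ler_prod => x _.
  case: ifP => _; last by rewrite ppge0 lexx.
  rewrite addr_ge0 //= lerD2l pp_le //.
  by apply: jsmin; rewrite /P j0.
have M : mle1 (Phi0 (R:=R)) xs (phiJ js).
  split; first by right; exists js.
  move=> phi [->|[j j0 ->]]; rewrite !lik_phiJ ?lik_phis; first exact: ltW.
  case: (boolP (j \in xs)) => jin; last exact: D.
  by rewrite B // prodr_ge0 // => i _; apply: qq_ge0.
exists js; split => // phih [[->|//] H].
have := H _ (proj1 M); rewrite lik_phiJ lik_phis => H'.
by have := lt_le_trans C H'; rewrite ltxx.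
Qed.

Lemma fails {R : realType} m n (s : m.-tuple nat * n.-tuple (nat * nat)) :
  0%N \in (s.1 : seq nat) -> mle_fails (Phi0 (R:=R)) Psi0 phis psis m n s.
Proof.
move=> x0; have [js [M H]] := @phase1 R _ x0.
have M2 : forall phih, mle2 (Psi0 (R:=R)) phih s.2 psis.
  by move=> phih; split => // psi ->.
split; first by exists (phiJ js).
split; first by move=> phih _; exists psis.
move=> phih psih /H [j _ ->] [-> _].
exact: dTV_J.
Qed.


Lemma ppE {R : realType} k : pp (R:=R) k = (2^-1) ^+ k.+1.
Proof. by rewrite /pp div1r natrX exprVn addn1. Qed.

Lemma sum_pp {R : realType} K : \sum_(k < K) pp (R:=R) k = 1 - (2^-1) ^+ K.
Proof.
elim: K => [|K IH]; first by rewrite big_ord0 expr0 subrr.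
rewrite big_ord_recr /= IH ppE !exprS.
set h := 2^-1 ^+ K; lra.
Qed.

Lemma bern {R : realType} (t : R) L : 0 <= t <= 1 -> 1 - L%:R * t <= (1 - t) ^+ L.
Proof.
move=> /andP[t0 t1]; elim: L => [|L IH]; first by rewrite mul0r subr0 expr0.
rewrite exprSr; apply: le_trans (_ : (1 - L%:R * t) * (1 - t) <= _).
  have : 0 <= L%:R * t * t by rewrite mulr_ge0 // mulr_ge0.
  rewrite -natr1; nra.
by rewrite ler_wpM2r // subr_ge0.
Qed.

Lemma big_bound {R : realType} L :
  2^-1 <= (1 - (2^-1 : R) ^+ L.+1) ^+ L.
Proof.
have h0 : 0 <= (2^-1 : R) ^+ L.+1 <= 1.
  rewrite exprn_ge0 //= exprn_ile1 //.
  by rewrite invf_le1 // ler1n.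
apply: le_trans (bern _ L h0).
have : (L%:R : R) <= 2 ^+ L by rewrite -natrX ler_nat ltnW // ltn_expl.
rewrite exprS exprVn.
have : 0 < (2 : R) ^+ L by rewrite exprn_gt0.
set u := (2 : R) ^+ L => u0 Lu.
have -> : L%:R * (2^-1 / u) = (L%:R / u) / 2 by rewrite mulrCA mulrC.
have : L%:R / u <= 1 by rewrite ler_pdivrMr // mul1r.
lra.
Qed.


Definition gg (N n K : nat) (d : {ffun 'I_N -> 'I_K} * {ffun 'I_n -> 'I_K}) :
  N.+1.-tuple nat * n.-tuple (nat * nat) :=
  (cons_tuple 0%N (map_tuple (fun i => val (d.1 i)) (ord_tuple N)),
   map_tuple (fun i => (val (d.2 i), val (d.2 i))) (ord_tuple n)).

Lemma gg_inj N n K : injective (gg N n K).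
Proof.
move=> [a1 b1] [a2 b2] /= [e1 e2].
move/eq_in_map: e1 => h1; move/eq_in_map: e2 => h2.
congr pair; apply/ffunP => i; apply: val_inj.
  by apply: h1; rewrite mem_enum.
by have := h2 i; rewrite mem_enum => /(_ isT) [].
Qed.

Lemma gg_weight {R : realType} N n K d :
  sample_weight (phis (R:=R)) psis (gg N n K d) =
  pp 0 * \prod_i pp (d.1 i) * \prod_i pp (d.2 i).
Proof.
rewrite /sample_weight /gg /= big_cons marg_phis big_map big_map !big_enum /=.
congr (_ * _ * _); apply: eq_bigr => i _; first by rewrite marg_phis.
by rewrite joint_s eqxx.
Qed.

Lemma sum_gg {R : realType} N n K :
  \sum_(d : {ffun 'I_N -> 'I_K} * {ffun 'I_n -> 'I_K})
     sample_weight (phis (R:=R)) psis (gg N n K d) =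
  pp 0 * (\sum_(k < K) pp k) ^+ N * (\sum_(k < K) pp k) ^+ n.
Proof.
under eq_bigr do rewrite gg_weight.
rewrite -(pair_bigA _ (fun (a : {ffun 'I_N -> 'I_K}) (b : {ffun 'I_n -> 'I_K}) => pp (R:=R) 0 * \prod_i pp (a i) * \prod_i pp (b i))) /=.
under eq_bigr do rewrite -mulr_sumr.
rewrite -mulr_suml -mulr_sumr.
rewrite -!(bigA_distr_bigA (fun (i : 'I__) (j : 'I_K) => pp (R:=R) j)) /=.
by rewrite !prodr_const !card_ord.
Qed.

Lemma prob_bound {R : realType} N n :
  ((4^-1 : R)%:E <= sample_prob phis psis (mle_fails (Phi0 (R:=R)) Psi0 phis psis N.+1 n))%E.
Proof.
pose K := (N + n).+1.
apply: esum_ge; exists (gg N n K @` setT).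
  split; first exact: finite_image finite_finset.
  move=> s [d _ <-]; apply: fails.
  by rewrite /= in_cons eqxx.
rewrite fsbig_image; last by move=> ? ? _ _; apply: gg_inj.
have E : [set: {ffun 'I_N -> 'I_K} * {ffun 'I_n -> 'I_K}] =
    [set` (enum {: {ffun 'I_N -> 'I_K} * {ffun 'I_n -> 'I_K}})].
  by apply/seteqP; split => x //= _; rewrite mem_enum.
rewrite E -fsbig_seq ?enum_uniq // big_enum /= sumEFin lee_fin sum_gg.
rewrite sum_pp -mulrA -exprD pp0.
have := big_bound (R:=R) (N + n).
have : 0 <= (1 - (2^-1 : R) ^+ (N + n).+1) ^+ (N + n).
  apply: le_trans (big_bound _); lra.
rewrite /K; lra.
Qed.


Theorem mainTheorem18 (R : realType) :
  exists (Phi Psi : set (nat -> nat -> R)) (phis psis : nat -> nat -> R),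
    (forall phi, Phi phi -> is_joint_pmf phi) /\
    (forall psi, Psi psi -> is_cond_pmf psi) /\
    Phi phis /\ Psi psis /\
    forall c : R, 0 < c ->
      exists m n : nat, c <= m%:R /\ c <= n%:R /\
        ((2^-1 * (1 - expR (-1)) * expR (-1))%:E <=
           sample_prob phis psis (mle_fails Phi Psi phis psis m n))%E.
Proof.
exists Phi0, Psi0, phis, psis.
split; first by move=> phi [->|[j j0 ->]]; [exact: pmf_phis|exact: pmf_phiJ].
split; first by move=> psi ->; exact: cond_psis.
split; first by left.
split; first by [].
move=> c c0; exists (Num.truncn c).+1, (Num.truncn c).+1.
have hc : c <= (Num.truncn c).+1%:R by apply: ltW; apply: truncnS_gt.
split => //; split => //.
apply: le_trans (prob_bound _ _).
rewrite lee_fin.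
have := expR_gt0 (-1 : R); nra.
Qed.
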